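(* For every cell $\eta\in\Delta_k$ there is a unique cell $\eta'\in\Delta_{n-k}$ with $\mathsf{t}(\eta')=\mathsf{h}(\eta)$, $\mathsf{h}(\eta')=\mathsf{t}(\eta)$ and $x^{\operatorname{div}(\eta')}=x_1x_2\cdots x_n/x^{\operatorname{div}(\eta)}$, and the map $\tau:\Delta\to\Delta$, $\eta\mapsto\eta'$, is an involution.
   Context: $\mathbb{k}$ is an algebraically closed field, $G\subset\operatorname{SL}(n,\mathbb{k})$ a finite abelian group of diagonal matrices with $\operatorname{char}\mathbb{k}\nmid|G|$, $\rho_i\in G^*$ the $i$-th diagonal entry. Let $\deg:\mathbb{Z}^n\to G^*$, $\chi_i\mapsto\rho_i$, $M=\ker\deg$, $\mathbb{T}^n=\mathbb{R}^n/M$. For $u\in\mathbb{Z}^n$ and $S\subseteq\{1,\dots,n\}$ let $F(u,S)=\{u+\sum_{i\in S}\lambda_i\chi_i:0\le\lambda_i\le1\}$. The toric cell complex $\Delta$ is the set of images in $\mathbb{T}^n$ of the sets $F(u,S)$; $\Delta_k$ consists of those with $|S|=k$. For $\eta$ the image of $F(u,S)$: tail $\mathsf{t}(\eta)=\deg u\in G^*$, head $\mathsf{h}(\eta)=\deg(u+\sum_{i\in S}\chi_i)\in G^*$, label $\operatorname{div}(\eta)=\sum_{i\in S}\chi_i$, $x^{\operatorname{div}(\eta)}=\prod_{i\in S}x_i$. *)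

(* Defs.v *)
From HB Require Import structures.
From mathcomp Require Import all_boot all_order all_algebra.
From mathcomp Require Import reals.
From mathcomp Require Import mpoly.
From Stdlib Require Import ClassicalEpsilon.

Set Implicit Arguments.
Unset Strict Implicit.
Unset Printing Implicit Defensive.

Import Order.TTheory GRing.Theory Num.Theory.
Local Open Scope ring_scope.

(* Elements of G^* are represented by maps 'M[F]_n -> F, compared on G. *)
Definition deg (F : fieldType) (n : nat) (u : 'I_n -> int) : 'M[F]_n -> F :=
  fun g => \prod_(i < n) (g i i) ^ (u i).

Definition chareq (F : fieldType) (n : nat) (G : seq 'M[F]_n)
  (a b : 'M[F]_n -> F) : Prop := forall g, g \in G -> a g = b g.

Definition inM (F : fieldType) (n : nat) (G : seq 'M[F]_n) (u : 'I_n -> int) : Prop :=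
  chareq G (deg u) (fun _ => 1).

Definition chiS (n : nat) (S : {set 'I_n}) : 'I_n -> int :=
  fun i => Posz (i \in S).

Definition Fset (R : realType) (n : nat) (u : 'I_n -> int) (S : {set 'I_n}) :
  ('I_n -> R) -> Prop :=
  fun x => exists lam : 'I_n -> R,
    (forall i, i \in S -> 0 <= lam i <= 1) /\
    (forall i, x i = (u i)%:~R + (if i \in S then lam i else 0)).

(* The image of F(u,S) in T^n = R^n/M, represented by its (M-saturated)
   preimage F(u,S) + M in R^n. *)
Definition cell (R : realType) (F : fieldType) (n : nat) (G : seq 'M[F]_n)
  (u : 'I_n -> int) (S : {set 'I_n}) : ('I_n -> R) -> Prop :=
  fun x => exists m, inM G m /\ Fset u S (fun i => x i - (m i)%:~R).

Definition is_cellk (R : realType) (F : fieldType) (n : nat) (G : seq 'M[F]_n)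
  (k : nat) (eta : ('I_n -> R) -> Prop) : Prop :=
  exists u (S : {set 'I_n}), #|S| = k /\ eta = @cell R F n G u S.

Definition rep (R : realType) (F : fieldType) (n : nat) (G : seq 'M[F]_n)
  (eta : ('I_n -> R) -> Prop) : ('I_n -> int) * {set 'I_n} :=
  epsilon (inhabits ((fun _ => 0%R), set0))
    (fun p => eta = @cell R F n G p.1 p.2).

Definition tail (R : realType) (F : fieldType) (n : nat) (G : seq 'M[F]_n)
  (eta : ('I_n -> R) -> Prop) : 'M[F]_n -> F :=
  deg (rep G eta).1.

Definition head (R : realType) (F : fieldType) (n : nat) (G : seq 'M[F]_n)
  (eta : ('I_n -> R) -> Prop) : 'M[F]_n -> F :=
  deg (fun i => (rep G eta).1 i + chiS (rep G eta).2 i).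

Definition xdiv (R : realType) (F : fieldType) (n : nat) (G : seq 'M[F]_n)
  (eta : ('I_n -> R) -> Prop) : {mpoly F[n]} :=
  \prod_(i in (rep G eta).2) 'X_i.

Definition partner (R : realType) (F : fieldType) (n : nat) (G : seq 'M[F]_n)
  (k : nat) (eta eta' : ('I_n -> R) -> Prop) : Prop :=
  [/\ is_cellk G (n - k) eta',
      chareq G (tail G eta') (head G eta),
      chareq G (head G eta') (tail G eta) &
      xdiv G eta' * xdiv G eta = \prod_(i < n) 'X_i].

Definition tau (R : realType) (F : fieldType) (n : nat) (G : seq 'M[F]_n)
  (eta : ('I_n -> R) -> Prop) : ('I_n -> R) -> Prop :=
  epsilon (inhabits eta)
    (fun eta' => exists k, is_cellk G k eta /\ partner G k eta eta').

(* Main.v *)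
Require Import Defs.
From HB Require Import structures.
From mathcomp Require Import all_boot all_order all_algebra.
From mathcomp Require Import reals.
From mathcomp Require Import mpoly.
From mathcomp Require Import lra zify.
From Stdlib Require Import ClassicalEpsilon FunctionalExtensionality PropExtensionality.
Import Order.TTheory GRing.Theory Num.Theory.
Local Open Scope ring_scope.

Set Implicit Arguments.
Unset Strict Implicit.

Section Aux.
Variables (F : closedFieldType) (R : realType) (n : nat) (G : seq 'M[F]_n).
Hypothesis hGdiag : forall g, g \in G -> forall i j, i != j -> g i j = 0.
Hypothesis hGdet : forall g, g \in G -> \det g = 1.

Lemma det_prod g : g \in G -> \det g = \prod_(i < n) g i i.
Proof.
move=> gG.
have eg : g = diag_mx (\row_i g i i).
  apply/matrixP => i j; rewrite !mxE.
  case: (eqVneq i j) => [->|nij]; first by rewrite mulr1n.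
  by rewrite mulr0n hGdiag.
by rewrite {1}eg det_diag; apply: eq_bigr => i _; rewrite !mxE.
Qed.

Lemma gii_unit g i : g \in G -> g i i \is a GRing.unit.
Proof.
move=> gG; rewrite unitfE; apply/eqP => gi0.
have := hGdet gG; rewrite det_prod // (bigD1 i) //= gi0 mul0r => /eqP.
by rewrite eq_sym oner_eq0.
Qed.

Lemma deg_ext (u v : 'I_n -> int) (g : 'M[F]_n) : (forall i, u i = v i) -> deg u g = deg v g.
Proof. by move=> h; rewrite /deg; apply: eq_bigr => i _; rewrite h. Qed.

Lemma degD (u v : 'I_n -> int) (g : 'M[F]_n) : g \in G ->
  deg (fun i => u i + v i) g = deg u g * deg v g.
Proof.
move=> gG; rewrite /deg -big_split; apply: eq_bigr => i _.
by rewrite exprzDr // gii_unit.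
Qed.

Lemma deg0 (g : 'M[F]_n) : deg (fun _ => 0) g = 1.
Proof. by rewrite /deg big1 // => i _; rewrite expr0z. Qed.

Lemma deg1 g : g \in G -> deg (fun _ => 1) g = 1.
Proof.
move=> gG; rewrite -(hGdet gG) det_prod //.
Qed.

Lemma degN (u : 'I_n -> int) (g : 'M[F]_n) : g \in G -> deg (fun i => - u i) g * deg u g = 1.
Proof.
move=> gG; rewrite -degD // -(deg0 g); apply: deg_ext => i; by rewrite addNr.
Qed.

Lemma int_small (z : int) : -(1/2) <= (z%:~R : R) <= 1/2 -> z = 0.
Proof.
move=> /andP [h1 h2].
have [->//|nz] := eqVneq z 0; exfalso.
have [z1|z1] := lerP 1 z.
  have : (1 : R) <= z%:~R by rewrite -(ler_int R) in z1.
  lra.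
have z2 : z <= -1 by lia.
have : (z%:~R : R) <= -1 by rewrite -(ler_int R) in z2.
lra.
Qed.

Definition pt (u : 'I_n -> int) (S : {set 'I_n}) : 'I_n -> R :=
  fun i => (u i)%:~R + (if i \in S then 1/2 else 0).

Lemma pt_in u S : cell G u S (pt u S).
Proof.
exists (fun _ => 0); split; first by move=> g _; exact: deg0.
exists (fun _ => 1/2); split; first by move=> i _; apply/andP; split; lra.
by move=> i; rewrite /pt mulr0z subr0.
Qed.

Lemma cell_pt u S u' S' : cell G u S (pt u' S') ->
  S' \subset S /\ (S \subset S' -> chareq G (deg u') (deg u)).
Proof.
case=> m [mM [lam [hlam hx]]].
have key : forall i, ((u' i - m i - u i)%:~R : R) =
   (if i \in S then lam i else 0) - (if i \in S' then 1/2 else 0).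
  move=> i; have := hx i; rewrite /pt !rmorphB /=.
  move: (if i \in S then lam i else 0) (if i \in S' then 1/2 else 0) => a b.
  lra.
split.
  apply/subsetP => i iS'; case iS: (i \in S) => //.
  have e := key i; rewrite iS iS' in e.
  have h : -(1/2) <= ((u' i - m i - u i)%:~R : R) <= 1/2.
    by rewrite e; apply/andP; split; lra.
  have z0 := int_small h; move: e; rewrite z0 mulr0z; lra.
move=> SS' g gG.
have eu : forall i, u' i = m i + u i.
  move=> i; have := key i.
  case iS: (i \in S).
    have iS' : i \in S' by apply: (subsetP SS').
    rewrite iS' => e; have := hlam i iS => /andP [l0 l1].
    have h : -(1/2) <= ((u' i - m i - u i)%:~R : R) <= 1/2.
      rewrite e; apply/andP; split; lra.
    have := int_small h; lia.
  case: (i \in S') => e.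
    have h : -(1/2) <= ((u' i - m i - u i)%:~R : R) <= 1/2.
      rewrite e; apply/andP; split; lra.
    have := int_small h; lia.
  have h : -(1/2) <= ((u' i - m i - u i)%:~R : R) <= 1/2.
    rewrite e; apply/andP; split; lra.
  have := int_small h; lia.
by rewrite (deg_ext _ eu) degD // mM // mul1r.
Qed.

Lemma cell_inj u S u' S' : cell (R:=R) G u S = cell G u' S' ->
  S = S' /\ chareq G (deg u') (deg u).
Proof.
move=> e.
have [h1 h2] := cell_pt (eq_ind_r (fun P => P (pt u' S')) (pt_in u' S') e).
have [h3 _] := cell_pt (eq_ind _ (fun P => P (pt u S)) (pt_in u S) _ e).
split; first by apply/eqP; rewrite eqEsubset h1 h3.
exact: h2.
Qed.

Lemma cell_sub u u' S : chareq G (deg u) (deg u') ->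
  forall x : 'I_n -> R, cell G u S x -> cell G u' S x.
Proof.
move=> eq x [m [mM [lam [hl hx]]]].
exists (fun i => m i + u i - u' i); split.
  move=> g gG; rewrite degD // degD // mM // mul1r eq //.
  by rewrite mulrC degN.
exists lam; split => // i; have := hx i; rewrite !rmorphB !rmorphD /=.
move: (if i \in S then lam i else 0) => a; lra.
Qed.

Lemma cell_shift u u' S : chareq G (deg u) (deg u') -> cell (R:=R) G u S = cell G u' S.
Proof.
move=> eq; apply: functional_extensionality => x.
apply: propositional_extensionality; split; apply: cell_sub => //.
by move=> g gG; rewrite eq.
Qed.

Lemma rep_spec k (eta : ('I_n -> R) -> Prop) : is_cellk G k eta ->
  eta = cell G (rep G eta).1 (rep G eta).2.
Proof.
move=> [u [S [_ e]]]; rewrite /rep.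
apply: (epsilon_spec (inhabits ((fun _ => 0%R), set0))
  (fun p => eta = cell G p.1 p.2)).
by exists (u, S).
Qed.

Lemma monoX (A B : {set 'I_n}) :
  (\prod_(i in A) 'X_i) * (\prod_(i in B) 'X_i) = \prod_(i < n) 'X_i :> {mpoly F[n]} ->
  A = ~: B.
Proof.
rewrite !mprodXE -mpolyXD => e.
set m1 := (_ + _)%MM in e; set m2 := (\big[_/_]_(i < n) _)%MM in e.
have em : m1 = m2.
  have := congr1 (fun p => p@_m2) e; rewrite !mcoeffX eqxx.
  by case: eqP => // _ /eqP; rewrite eq_sym oner_eq0.
apply/setP => j; rewrite inE.
have := congr1 (fun m : 'X_{1..n} => m j) em; rewrite /m1 /m2 mnmDE !mnm_sumE.
have cnt : forall C : {set 'I_n}, (\sum_(i in C) U_(i)%MM j = (j \in C))%N.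
  move=> C; case jC: (j \in C).
    rewrite (bigD1 j) //= mnm1E eqxx big1 // => i /andP [_ ij].
    by rewrite mnm1E (negbTE ij).
  rewrite big1 // => i iC; rewrite mnm1E; case: eqP => // ij.
  by rewrite ij jC in iC.
rewrite !cnt (bigD1 j) //= mnm1E eqxx big1 => [|i ij]; last by rewrite mnm1E (negbTE ij).
by case: (j \in A); case: (j \in B).
Qed.

Definition dual (eta : ('I_n -> R) -> Prop) :=
  cell (R:=R) G (fun i => (rep G eta).1 i + chiS (rep G eta).2 i) (~: (rep G eta).2).

Lemma chiSC (S : {set 'I_n}) i : chiS S i + chiS (~: S) i = 1.
Proof. by rewrite /chiS in_setC; case: (i \in S). Qed.

Lemma dual_partner k (eta : ('I_n -> R) -> Prop) : is_cellk G k eta -> partner G k eta (dual eta).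
Proof.
move=> hk; have e0 := rep_spec hk.
case: hk => u [S [cS eS]].
have [eS0 _] := cell_inj (etrans (esym eS) e0).
set u0 := (rep G eta).1 in e0 *; set S0 := (rep G eta).2 in e0 eS0 *.
have hc : is_cellk G (n - k) (dual eta).
  exists (fun i => u0 i + chiS S0 i), (~: S0); split => //.
  rewrite -eS0; have := cardsC S; rewrite card_ord cS; lia.
have e1 := rep_spec hc.
have [eS1 ed1] := cell_inj (etrans (esym e1) erefl).
move: eS1 ed1; rewrite /dual -/u0 -/S0 => eS1 ed1.
split => //.
- by move=> g gG; rewrite /tail /Defs.head -/u0 -/S0 -ed1.
- move=> g gG; rewrite /tail /Defs.head /dual -/u0 -/S0 eS1 degD // -ed1 // degD //.
  rewrite -mulrA -degD // (deg_ext _ (chiSC S0)) deg1 // mulr1.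
  done.
- rewrite /xdiv /dual -/S0 eS1.
  rewrite mulrC (bigID (fun i => i \in S0) predT) /=.
  congr (_ * _); apply: eq_bigl => i; by rewrite in_setC.
Qed.

Lemma partner_dual k (eta e : ('I_n -> R) -> Prop) : partner G k eta e -> e = dual eta.
Proof.
case=> hc ht _ hx.
have e1 := rep_spec hc.
have eS := monoX hx.
rewrite e1 eS /dual; apply: cell_shift => g gG.
by have := ht g gG; rewrite /tail /Defs.head.
Qed.

Lemma cellk_k k k' (eta : ('I_n -> R) -> Prop) : is_cellk G k eta -> is_cellk G k' eta -> k = k'.
Proof.
move=> [u [S [cS e]]] [u' [S' [cS' e']]].
have [eSS _] := cell_inj (etrans (esym e) e'); by rewrite -cS -cS' eSS.
Qed.

Lemma partner_sym k (eta e : ('I_n -> R) -> Prop) : is_cellk G k eta -> partner G k eta e ->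
  partner G (n - k) e eta.
Proof.
move=> hk [hc ht hh hx]; split.
- have -> : (n - (n - k) = k)%N => //.
  case: hk => u [S [cS _]]; have : (k <= n)%N by rewrite -cS; have := max_card S; rewrite card_ord.
  lia.
- by move=> g gG; rewrite hh.
- by move=> g gG; rewrite ht.
- by rewrite mulrC.
Qed.

End Aux.

Theorem proposition4p6 (F : closedFieldType) (R : realType) (n : nat)
  (G : seq 'M[F]_n)
  (hGuniq : uniq G)
  (hG1 : 1%:M \in G)
  (hGmul : forall g h, g \in G -> h \in G -> g *m h \in G)
  (hGdiag : forall g, g \in G -> forall i j, i != j -> g i j = 0)
  (hGdet : forall g, g \in G -> \det g = 1)
  (hchar : (size G)%:R != 0 :> F) :
  forall (k : nat) (eta : ('I_n -> R) -> Prop),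
    is_cellk G k eta ->
    (exists! eta', partner G k eta eta') /\ tau G (tau G eta) = eta.
Proof.
have tau_eq : forall k (eta : ('I_n -> R) -> Prop), is_cellk G k eta ->
    tau G eta = dual G eta.
  move=> k eta hk.
  have : exists k', is_cellk G k' eta /\ partner G k' eta (tau G eta).
    rewrite /tau; apply: (epsilon_spec (inhabits eta)
      (fun e => exists k', is_cellk G k' eta /\ partner G k' eta e)).
    by exists (dual G eta), k; split => //; exact: (dual_partner hGdiag hGdet hk).
  case=> k' [_ hp]; exact: partner_dual hp.
move=> k eta hk; split.
  exists (dual G eta); split; first exact: (@dual_partner F R n G hGdiag hGdet k eta hk).
  by move=> e hp; rewrite (partner_dual hGdiag hGdet hp).
have hp := dual_partner hGdiag hGdet hk.
have hps := partner_sym hk hp.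
have [hc' _ _ _] := hp.
rewrite (tau_eq _ _ hk) (tau_eq _ _ hc').
exact: (esym (partner_dual hGdiag hGdet hps)).
Qed.
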